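(* In the setting described in the context, let $p$ be a facet of $\Delta_\lambda$ of $\mathbf a$-degree at least $1$, with its nodes labelled $1,\dots,k-1$ so that $p$ is identified with the simplex on $[k-1]$. If $[k-1]\setminus L$ is a facet of $F_{<p}\cap p$, where $L$ is a set of consecutive indices, then $|L|\le 2$.
   Context: Let $n,d\ge2$, $V(n,d)=\{\mathbf b\in\mathbb N^n:\sum_i b_i=d\}$, and let $\mathbf a\in V(n,d)$ satisfy $a_1\le\dots\le a_n$ and $\mathbf a\notin\{(0,\dots,0,d),(0,\dots,0,1,d-1),(0,\dots,0,2,d-2)\}$. Let $\Gamma=V(n,d)\setminus\{\mathbf a\}$ and assume $\Gamma+\Gamma=V(n,2d)$. Order $V(n,d)$ lexicographically ($b<c$ iff the first nonzero coordinate of $c-b$ is positive). Let $\lambda$ be in the semigroup generated by $\Gamma$, $k=|\lambda|=(\sum_i\lambda_i)/d$. A closed chain from $0$ to $\lambda$ is a sequence $0=v_0,v_1,\dots,v_k=\lambda$ in $\mathbb N^n$ with all links $v_j-v_{j-1}\in V(n,d)$; its $\mathbf a$-degree is the number of links equal to $\mathbf a$; its open chain is $\{v_1,\dots,v_{k-1}\}$, with $v_j$ labelled $j$. $\Delta_\lambda$ is the simplicial complex whose facets are all these open chains. Facets are ordered: $q<p$ iff $\mathbf a$-degree of $q$ is smaller than that of $p$, or equal and the link sequence of $q$ is lexicographically smaller than that of $p$ (first links compared first, using the order on $V(n,d)$). $F_{<p}$ is the subcomplex of $\Delta_\lambda$ generated by the facets $q<p$; $p$ also denotes the full simplex on its nodes.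 *)

(* Defs.v *)
From mathcomp Require Import all_boot.
Set Implicit Arguments. Unset Strict Implicit. Unset Printing Implicit Defensive.

Definition pt (n : nat) := {ffun 'I_n -> nat}.

Definition zpt n : pt n := [ffun _ => 0].
Definition addpt n (b c : pt n) : pt n := [ffun i => b i + c i].
Definition sumpts n (s : seq (pt n)) : pt n := foldr (@addpt n) (zpt n) s.

Definition ptsum n (b : pt n) : nat := \sum_(i < n) b i.
Definition inV n (d : nat) (b : pt n) : bool := ptsum b == d.

Definition inGamma n d (a b : pt n) : bool := inV d b && (b != a).

Definition ltlex n (b c : pt n) : bool :=
  [exists i : 'I_n, [forall j : 'I_n, (j < i) ==> (b j == c j)] && (b i < c i)].

Definition tail2 n (x y : nat) : pt n :=
  [ffun i : 'I_n => if val i == n.-1 then y else if val i == n.-2 then x else 0].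

Definition sorted_pt n (a : pt n) : Prop := forall i j : 'I_n, i <= j -> a i <= a j.

Definition GammaGamma n d (a : pt n) : Prop :=
  forall c : pt n, inV (2 * d) c <->
    exists b1 b2, inGamma d a b1 /\ inGamma d a b2 /\ c = addpt b1 b2.

Definition in_semigroup n d (a lam : pt n) : Prop :=
  exists s : seq (pt n), all (inGamma d a) s /\ lam = sumpts s.

(* A closed chain from 0 to lam, given by its sequence of links. *)
Definition is_chain n d (lam : pt n) (s : seq (pt n)) : Prop :=
  all (inV d) s /\ sumpts s = lam.

Definition node n (s : seq (pt n)) (j : nat) : pt n := sumpts (take j s).

Definition in_open n (s : seq (pt n)) (v : pt n) : bool :=
  has (fun j => node s j == v) (iota 1 (size s).-1).

Definition adeg n (a : pt n) (s : seq (pt n)) : nat := count (pred1 a) s.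

Definition lexseq n (q p : seq (pt n)) : Prop :=
  exists i, i < size p /\ take i q = take i p /\
            ltlex (nth (zpt n) q i) (nth (zpt n) p i).

Definition facet_lt n (a : pt n) (q p : seq (pt n)) : Prop :=
  adeg a q < adeg a p \/ (adeg a q = adeg a p /\ lexseq q p).

(* T (a set of labels in [k-1]) is a face of F_{<p} ∩ p, where the node
   v_j of p carries label j. *)
Definition face_Fp n d (a lam : pt n) (p : seq (pt n)) (T : pred nat) : Prop :=
  (forall x, T x -> 0 < x < size p) /\
  exists q, is_chain d lam q /\ facet_lt a q p /\
            forall x, T x -> in_open q (node p x).

Definition facet_Fp n d (a lam : pt n) (p : seq (pt n)) (T : pred nat) : Prop :=
  face_Fp d a lam p T /\
  forall T', face_Fp d a lam p T' -> (forall x, T x -> T' x) -> (forall x, T' x -> T x).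

(* Main.v *)
Require Import Defs.
From mathcomp Require Import all_boot zify.
From Stdlib Require Import Classical.
Set Implicit Arguments. Unset Strict Implicit. Unset Printing Implicit Defensive.

Section Basics.
Variable n : nat.
Implicit Types (s : seq (pt n)) (b c x y : pt n).

Lemma addptE b c t : addpt b c t = b t + c t. Proof. by rewrite ffunE. Qed.
Lemma zptE t : zpt n t = 0. Proof. by rewrite ffunE. Qed.

Lemma sumptsE s t : sumpts s t = sumn (map (fun x => x t) s).
Proof. by elim: s => [|x s IH] /=; rewrite ?zptE // addptE IH. Qed.

Lemma sumpts_cat s1 s2 t : sumpts (s1 ++ s2) t = sumpts s1 t + sumpts s2 t.
Proof. by rewrite !sumptsE map_cat sumn_cat. Qed.

Lemma sumpts_cons x s t : sumpts (x :: s) t = x t + sumpts s t.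
Proof. by rewrite addptE. Qed.

Lemma sumpts1 x t : sumpts [:: x] t = x t.
Proof. by rewrite sumpts_cons zptE addn0. Qed.

Lemma mem_le_sumpts x s t : x \in s -> x t <= sumpts s t.
Proof.
elim: s => [|y s IH] //=; rewrite in_cons addptE => /orP [/eqP -> | /IH]; lia.
Qed.

Lemma ptsum_add b c : ptsum (addpt b c) = ptsum b + ptsum c.
Proof. by rewrite /ptsum -big_split; apply: eq_bigr => t _; rewrite ffunE. Qed.

Lemma ptsum_zpt : ptsum (zpt n) = 0.
Proof. by rewrite /ptsum big1 // => t _; rewrite ffunE. Qed.

Lemma ptsum_sumpts d s : all (inV d) s -> ptsum (sumpts s) = size s * d.
Proof.
elim: s => [|x s IH] /=; first by rewrite ptsum_zpt.
by move=> /andP [/eqP Hx /IH Hs]; rewrite ptsum_add Hx Hs mulSn.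
Qed.

Lemma pt_eq b c : (forall t, b t = c t) -> b = c.
Proof. by move=> H; apply/ffunP => t. Qed.

Definition subpt b c : pt n := [ffun t => b t - c t].
Lemma subptE b c t : subpt b c t = b t - c t. Proof. by rewrite ffunE. Qed.

Lemma ptsum_sub b c : (forall t, c t <= b t) -> ptsum (subpt b c) = ptsum b - ptsum c.
Proof.
move=> H; have -> : ptsum b = ptsum (addpt c (subpt b c)).
  by congr ptsum; apply: pt_eq => t; rewrite addptE subptE; have := H t; lia.
by rewrite ptsum_add addKn.
Qed.

Definition ept (j : 'I_n) : pt n := [ffun t => (t == j) : nat].
Definition mv b (i j : 'I_n) : pt n := [ffun t => b t - (t == i) + (t == j)].

Lemma mv_c b (c c' : 'I_n) : c != c' -> mv b c c' c = b c - 1.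
Proof. by move=> H; rewrite ffunE eqxx (negbTE H) addn0. Qed.
Lemma mv_c' b (c c' : 'I_n) : c != c' -> mv b c c' c' = b c' + 1.
Proof. by move=> H; rewrite ffunE eqxx eq_sym (negbTE H) subn0. Qed.
Lemma mv_o b (c c' : 'I_n) t : t != c -> t != c' -> mv b c c' t = b t.
Proof. by move=> H1 H2; rewrite ffunE (negbTE H1) (negbTE H2) subn0 addn0. Qed.

Lemma ptsum2 (f : pt n) (i j : 'I_n) : i != j ->
  ptsum f = f i + f j + \sum_(t | (t != i) && (t != j)) f t.
Proof.
move=> Hij; rewrite /ptsum (bigD1 i) //= (bigD1 j) /=; last by rewrite eq_sym.
by rewrite addnA; congr (_ + _); apply: eq_bigl => t; rewrite andbC.
Qed.

Lemma ptsum_mv b (c c' : 'I_n) : c != c' -> 0 < b c -> ptsum (mv b c c') = ptsum b.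
Proof.
move=> H H0; rewrite (ptsum2 _ H) (ptsum2 b H) mv_c // mv_c' //.
rewrite (eq_bigr (fun t => b t)); last by move=> t /andP [H1 H2]; rewrite mv_o.
have -> : b c - 1 + (b c' + 1) = b c + b c' by lia.
by [].
Qed.

Lemma ptsum_only2 (f : pt n) (i j : 'I_n) : i != j ->
  (forall t, t != i -> t != j -> f t = 0) -> ptsum f = f i + f j.
Proof.
move=> Hij H; rewrite (ptsum2 _ Hij) big1 ?addn0 // => t /andP [H1 H2]; exact: H.
Qed.

Lemma lex_pref b c (r : 'I_n) :
  (forall t : 'I_n, t <= r -> b t <= c t) -> b r < c r -> ltlex b c.
Proof.
move=> Hle Hlt.
have Pr : b r != c r by rewrite neq_ltn Hlt.
case: (@arg_minnP _ r (fun t => b t != c t) (fun t : 'I_n => val t) Pr) => t0 Ht0 Hmin.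
have t0r : t0 <= r := Hmin r Pr.
apply/existsP; exists t0; apply/andP; split.
  apply/forallP => j; apply/implyP => Hj; apply: contraTT Hj => Hne.
  by rewrite -leqNgt; apply: Hmin.
by rewrite ltn_neqAle Ht0 Hle.
Qed.

Lemma ltlex_irr b : ~~ ltlex b b.
Proof. by apply/existsP => [[t /andP [_]]]; rewrite ltnn. Qed.

End Basics.

Lemma lt_neq n (t r : 'I_n) : t < r -> t != r.
Proof. by move=> H; rewrite neq_ltn H. Qed.
Lemma gt_neq n (t r : 'I_n) : r < t -> t != r.
Proof. by move=> H; rewrite neq_ltn H orbT. Qed.

Lemma tail2_of n (a : pt n) (N N1 : 'I_n) : val N = n.-1 -> val N1 = n.-2 -> 1 < n ->
  (forall t, t != N1 -> t != N -> a t = 0) -> a = tail2 n (a N1) (a N).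
Proof.
move=> HN HN1 n1 H; apply: pt_eq => t; rewrite ffunE.
case: eqP => Ht1; first by congr (a _); apply: val_inj; rewrite HN.
case: eqP => Ht2; first by congr (a _); apply: val_inj; rewrite HN1.
apply: H; apply/eqP => E; subst t; [exact: Ht2 | exact: Ht1].
Qed.

Lemma core n d (a P Q R U x : pt n) :
  2 <= n -> 2 <= d -> sorted_pt a ->
  a <> tail2 n 0 d -> a <> tail2 n 1 (d - 1) -> a <> tail2 n 2 (d - 2) ->
  inV d a -> inV d P -> inV d Q -> Q <> a ->
  (forall t, P t + Q t <= U t) ->
  inV d x -> x <> a -> (forall t, x t <= U t + R t) -> ltlex x P ->
  exists y, inV d y /\ y <> a /\
    (((forall t, y t <= U t) /\ ltlex y P) \/ ((forall t, y t <= Q t + R t) /\ ltlex y Q)).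
Proof.
move=> n2 d2 Hs Ht0 Ht1 Ht2 Ha HP HQ HQa HPQU Hx Hxa HxUR Hlex.
apply: NNPP => Hno.
have Hc : forall y, inV d y -> ((forall t, y t <= U t) /\ ltlex y P \/
      (forall t, y t <= Q t + R t) /\ ltlex y Q) -> y = a.
  by move=> y Hy H; apply: NNPP => ne; apply: Hno; exists y.
have [r Hr] : exists r, U r < x r.
  apply: NNPP => H; apply: Hxa; apply: Hc => //; left; split => // t.
  by rewrite leqNgt; apply/negP => Ht; apply: H; exists t.
case/existsP: Hlex => r0 /andP [/forallP Hpre Hr0].
have Hpre' : forall j : 'I_n, j < r0 -> x j = P j.
  by move=> j Hj; have := Hpre j; rewrite Hj => /eqP.
have HR : 0 < R r by have := HxUR r; lia.
have Hrr0 : r0 < r.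
  rewrite ltnNge; apply/negP; rewrite leq_eqVlt => /orP [/eqP Heq | Hlt].
    have Er : r = r0 by apply: val_inj.
    subst r; have := HPQU r0; lia.
  by have := Hpre' r Hlt; have := HPQU r; lia.
have HP0 : 0 < P r0 by lia.
have HQP : ~ ltlex Q P.
  move=> HQP; apply: HQa; apply: Hc => //; left; split => // t; have := HPQU t; lia.
have [r1 [Hr1 HQ1]] : exists r1 : 'I_n, r1 <= r0 /\ 0 < Q r1.
  apply: NNPP => H; apply: HQP; apply: (@lex_pref _ _ _ r0).
    move=> t Ht; suff -> : Q t = 0 by [].
    by apply: NNPP => Hne; apply: H; exists t; split => //; lia.
  suff -> : Q r0 = 0 by [].
  by apply: NNPP => Hne; apply: H; exists r0; split => //; lia.
have Hyc : forall c : 'I_n, c < r -> 0 < Q c -> mv Q c r = a.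
  move=> c Hc1 Hc2; have Hcr := lt_neq Hc1.
  apply: Hc; first by rewrite /inV ptsum_mv.
  right; split.
    move=> t; case: (eqVneq t c) => [->|Htc]; first by rewrite mv_c //; lia.
    case: (eqVneq t r) => [->|Htr]; first by rewrite mv_c' //; lia.
    by rewrite mv_o //; lia.
  apply: (@lex_pref _ _ _ c); last by rewrite mv_c //; lia.
  move=> t Ht; case: (eqVneq t c) => [->|Htc]; first by rewrite mv_c //; lia.
  by rewrite mv_o // lt_neq //; apply: leq_ltn_trans Hc1.
have Hr1r : r1 < r by apply: leq_ltn_trans Hrr0.
have E1 := Hyc r1 Hr1r HQ1.
have Z1 : forall c : 'I_n, c < r -> c != r1 -> Q c = 0.
  move=> c Hc1 Hcr1; apply: NNPP => Hne; have Hq : 0 < Q c by lia.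
  have E2 := Hyc c Hc1 Hq.
  have : mv Q c r c = mv Q r1 r c by rewrite E2 E1.
  by rewrite mv_c ?lt_neq // (mv_o _ Hcr1) ?lt_neq //; lia.
have a_r : a r = Q r + 1 by rewrite -E1 mv_c' // lt_neq.
have a_r1 : a r1 = Q r1 - 1 by rewrite -E1 mv_c // lt_neq.
have a_o : forall t, t != r1 -> t != r -> a t = Q t by move=> t H1 H2; rewrite -E1 mv_o.
have nN : n.-1 < n by lia.
have nN1 : n.-2 < n by lia.
pose N := Ordinal nN; pose N1 := Ordinal nN1.
have rN : r <= N by rewrite /= -ltnS prednK //; lia.
have vN : nat_of_ord N = n.-1 by [].
have vN1 : nat_of_ord N1 = n.-2 by [].
have N1N : N1 != N by apply: lt_neq; rewrite vN vN1; lia.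
have Hsum2 : forall f : pt n, (forall t, t != N1 -> t != N -> f t = 0) -> ptsum f = f N1 + f N.
  by move=> f Hf; apply: ptsum_only2.
move: rN; rewrite leq_eqVlt => /orP [/eqP rEN | rltN].
-
  have EN : r = N by apply: val_inj.
  subst r.
  have r1N1 : nat_of_ord r1 = n.-2.
    apply: NNPP => H.
    have Hlt : r1 < N1 by rewrite vN1; move: Hr1r; rewrite vN; lia.
    have aN1 : a N1 = 0.
      have h1 : N1 != r1 := gt_neq Hlt.
      have h2 : N1 < N by rewrite vN vN1; lia.
      rewrite a_o //.
      exact: Z1.
    have az : forall t, t != N1 -> t != N -> a t = 0.
      move=> t H1 H2; have : a t <= a N1.
        apply: Hs; rewrite vN1; have := ltn_ord t.
        have : nat_of_ord t != n.-1 by [].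
        lia.
      by rewrite aN1; lia.
    apply: Ht0; rewrite [LHS](@tail2_of _ a N N1 erefl erefl n2 az).
    have Hs2 := Hsum2 a az; move: Ha; rewrite /inV Hs2 aN1 add0n => /eqP ->.
    by [].
  have r0E : r0 = N1 by apply: val_inj => /=; move: Hr1 Hrr0; rewrite vN r1N1; lia.
  have r1E : r1 = N1 by apply: val_inj => /=; rewrite r1N1.
  subst r0 r1.
  have az2 : forall t, t != N1 -> t != N -> a t = 0.
    move=> t H1 H2; rewrite a_o //; apply: Z1 => //.
    have := ltn_ord t; have : nat_of_ord t != n.-1 by []. rewrite vN; lia.
  have HaT : a = tail2 n (a N1) (a N) by apply: tail2_of => //; lia.
  have Hsum : a N1 + a N = d by rewrite -(Hsum2 a az2); apply/eqP.
  have k3 : 3 <= a N1.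
    rewrite leqNgt; apply/negP => Hk.
    have : a N1 = 0 \/ a N1 = 1 \/ a N1 = 2 by lia.
    case=> [Hk0|[Hk0|Hk0]]; [apply: Ht0 | apply: Ht1 | apply: Ht2];
      rewrite {1}HaT Hk0; congr tail2; lia.
  have HsNN : a N1 <= a N by apply: Hs; rewrite vN vN1; lia.
  have Hy1 : mv P N1 N = a.
    apply: Hc; first by rewrite /inV ptsum_mv.
    left; split.
      move=> t; case: (eqVneq t N1) => [->|H1]; first by rewrite mv_c //; have := HPQU N1; lia.
      case: (eqVneq t N) => [->|H2]; first by rewrite mv_c' //; have := HPQU N; lia.
      by rewrite mv_o //; have := HPQU t; lia.
    apply: (@lex_pref _ _ _ N1); last by rewrite mv_c //; lia.
    move=> t Ht; case: (eqVneq t N1) => [->|H1]; first by rewrite mv_c //; lia.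
    by rewrite mv_o // lt_neq // vN; move: Ht; rewrite vN1; lia.
  have PN1 : a N1 = P N1 - 1 by rewrite -Hy1 mv_c.
  have PN : a N = P N + 1 by rewrite -Hy1 mv_c'.
  have aP : forall t, t != N1 -> t != N -> a t = P t by move=> t H1 H2; rewrite -Hy1 mv_o.
  have : mv a N1 N = a.
    apply: Hc; first by rewrite /inV ptsum_mv //; lia.
    left; split.
      move=> t; case: (eqVneq t N1) => [->|H1]; first by rewrite mv_c //; have := HPQU N1; lia.
      case: (eqVneq t N) => [->|H2]; first by rewrite mv_c' //; have := HPQU N; lia.
      by rewrite mv_o // aP //; have := HPQU t; lia.
    apply: (@lex_pref _ _ _ N1); last by rewrite mv_c //; lia.
    move=> t Ht; case: (eqVneq t N1) => [->|H1]; first by rewrite mv_c //; lia.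
    have H2 : t != N by rewrite lt_neq // vN; move: Ht; rewrite vN1; lia.
    by rewrite mv_o // aP.
  move=> /(congr1 (fun f : pt n => f N1)); rewrite mv_c //; lia.
-
  have r1N : r1 < N by apply: ltn_trans rltN.
  have r0N : r0 < N by apply: ltn_trans rltN.
  have aN : a N = Q N by rewrite a_o // gt_neq.
  have arN : a r <= a N by apply: Hs; apply: ltnW.
  have Hy : mv P r0 N = a.
    apply: Hc; first by rewrite /inV ptsum_mv // lt_neq.
    left; split.
      move=> t; case: (eqVneq t r0) => [->|H1]; first by rewrite mv_c ?lt_neq //; have := HPQU r0; lia.
      case: (eqVneq t N) => [->|H2]; first by rewrite mv_c' ?lt_neq //; have := HPQU N; lia.
      by rewrite mv_o //; have := HPQU t; lia.
    apply: (@lex_pref _ _ _ r0); last by rewrite mv_c ?lt_neq //; lia.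
    move=> t Ht; case: (eqVneq t r0) => [->|H1]; first by rewrite mv_c ?lt_neq //; lia.
    by rewrite mv_o // lt_neq //; apply: leq_ltn_trans r0N.
  have Pr0 : a r0 = P r0 - 1 by rewrite -Hy mv_c // lt_neq.
  have PN : a N = P N + 1 by rewrite -Hy mv_c' // lt_neq.
  have aP : forall t, t != r0 -> t != N -> a t = P t by move=> t H1 H2; rewrite -Hy mv_o.
  have r1r0 : r1 < r0.
    rewrite ltn_neqAle Hr1 andbT; apply/eqP => E.
    have E' : r1 = r0 by apply: val_inj.
    have hr0 : r != r0 := gt_neq Hrr0.
    have hrN : r != N := lt_neq rltN.
    subst r1; apply: HQP; apply: (@lex_pref _ _ _ r).
      move=> t Ht; case: (eqVneq t r0) => [->|H1]; first by lia.
      case: (eqVneq t r) => [->|H2]; first by rewrite -(aP r hr0 hrN); lia.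
      have HtN : t != N by apply: lt_neq; apply: leq_ltn_trans rltN.
      by rewrite -(a_o t H1 H2) -(aP t H1 HtN).
    by rewrite -(aP r hr0 hrN); lia.
  have Qr0 : Q r0 = 0 by apply: Z1 => //; apply: gt_neq.
  have ar0 : a r0 = 0 by rewrite (a_o r0 (gt_neq r1r0) (lt_neq Hrr0)).
  have Pr0' : P r0 = 1 by lia.
  have a_zero : forall t : 'I_n, t < r -> a t = 0.
    move=> t Ht; case: (leqP t r0) => Htr0.
      by have := Hs _ _ Htr0; rewrite ar0; lia.
    have h1 : t != r1 by apply: gt_neq; apply: ltn_trans Htr0.
    by rewrite (a_o t h1 (lt_neq Ht)); apply: Z1.
  have Q_ge : forall t, t != r -> a t <= Q t.
    move=> t Ht; case: (eqVneq t r1) => [->|H1]; first by lia.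
    by rewrite a_o.
  have Hfin : forall s : 'I_n, r < s ->
      (a s + 1 <= U s) -> mv a r s = a.
    move=> s Hrs Hsle; apply: Hc; first by rewrite /inV ptsum_mv ?lt_neq //; lia.
    left; split.
      move=> t; case: (eqVneq t r) => [->|H1]; first by rewrite mv_c ?lt_neq //; have := HPQU r; lia.
      case: (eqVneq t s) => [->|H2]; first by rewrite mv_c' ?lt_neq //.
      by rewrite mv_o //; have := HPQU t; have := Q_ge t H1; lia.
    apply: (@lex_pref _ _ _ r0); last by rewrite mv_o ?lt_neq // ?ar0 //; apply: ltn_trans Hrs.
    move=> t Ht; have Htr : t < r by apply: leq_ltn_trans Hrr0.
    by rewrite mv_o ?lt_neq // ?a_zero //; apply: ltn_trans Hrs.
  have ar1 : 1 <= a r by lia.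
  have Hfalse : forall s : 'I_n, r < s -> a s + 1 <= U s -> False.
    move=> s Hrs Hsle; move: (Hfin s Hrs Hsle) => /(congr1 (fun f : pt n => f r)).
    by rewrite mv_c ?lt_neq //; lia.
  move: rltN; rewrite vN => rltN.
  case: (ltnP r n.-2) => Hrn2.
  + apply: (Hfalse N1); first by rewrite vN1.
    have rN1 : r < N1 by rewrite vN1.
    have hN1r0 : N1 != r0 by apply: gt_neq; apply: ltn_trans rN1.
    have hN1r1 : N1 != r1 by apply: gt_neq; apply: ltn_trans rN1.
    have e1 := aP N1 hN1r0 N1N.
    have e2 := a_o N1 hN1r1 (gt_neq rN1).
    have e3 := Hs r N1 (ltnW rN1).
    have := HPQU N1; lia.
  + have rE : r = N1 by apply: val_inj => /=; lia.
    subst r.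
    have aN2 : 2 <= a N.
      rewrite leqNgt; apply/negP => HaN.
      have az : forall t, t != N1 -> t != N -> a t = 0.
        move=> t H1 H2; apply: a_zero; have := ltn_ord t.
        have : nat_of_ord t != n.-1 by [].
        have : nat_of_ord t != n.-2 by [].
        rewrite vN1; lia.
      apply: Ht1; rewrite [LHS](@tail2_of _ a N N1 erefl erefl n2 az).
      have Hs2 := Hsum2 a az; move: Ha; rewrite /inV Hs2 => /eqP <-.
      congr tail2; lia.
    apply: (Hfalse N); first by rewrite vN vN1; lia.
    have := HPQU N; lia.
Qed.

Lemma ptsum_ept n (j : 'I_n) : ptsum (ept j) = 1.
Proof.
rewrite /ptsum (bigD1 j) //= big1 => [|t Ht]; rewrite ffunE ?eqxx //.
by rewrite (negbTE Ht).
Qed.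

Lemma greedy n (c : pt n) k : k <= ptsum c -> exists u : pt n, (forall t, u t <= c t) /\ ptsum u = k.
Proof.
elim: k => [|k IH] Hk.
  by exists (zpt n); split => [t|]; rewrite ?zptE ?ptsum_zpt.
have [u [Hu Hs]] := IH (ltnW Hk).
have [t Ht] : exists t, u t < c t.
  apply: NNPP => H; have : ptsum c <= ptsum u.
    by apply: leq_sum => t _; rewrite leqNgt; apply/negP => Ht; apply: H; exists t.
  lia.
exists (addpt u (ept t)); split; last by rewrite ptsum_add ptsum_ept Hs addn1.
move=> t'; rewrite addptE ffunE; case: eqP => [->|_] /=; first by lia.
by rewrite addn0.
Qed.

Lemma decomp n d (a : pt n) : GammaGamma d a ->
  forall k (c : pt n), 2 <= k -> ptsum c = k * d ->
  exists D, size D = k /\ all (inGamma d a) D /\ sumpts D = c.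
Proof.
move=> HG k; elim: k => [|k IH] // c Hk Hc.
case: (leqP k 1) => Hk1.
  have k1 : k = 1 by lia.
  subst k; have : inV (2 * d) c by rewrite /inV Hc.
  move/HG => [b1 [b2 [Hb1 [Hb2 ->]]]].
  exists [:: b1; b2]; split => //; split; first by rewrite /= Hb1 Hb2.
  by apply: pt_eq => t; rewrite !sumpts_cons zptE addn0 addptE.
have [u [Hu Hus]] : exists u : pt n, (forall t, u t <= c t) /\ ptsum u = d.
  by apply: greedy; rewrite Hc; lia.
have Hc' : ptsum (subpt c u) = k * d by rewrite ptsum_sub // Hc Hus mulSn addKn.
have [D' [HD1 [HD2 HD3]]] := IH _ Hk1 Hc'.
case: D' HD1 HD2 HD3 => [/= HD1|g rest /= HD1 /andP [Hg Hrest] HD3]; first by lia.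
case: (eqVneq u a) => [Hua|Hua].
  have : inV (2 * d) (addpt u g).
    move: Hg => /andP [/eqP Hg _].
    by rewrite /inV ptsum_add Hg Hus; lia.
  move/HG => [h1 [h2 [Hh1 [Hh2 Heq]]]].
  exists [:: h1, h2 & rest]; split; first by rewrite /=; lia.
  split; first by rewrite /= Hh1 Hh2 Hrest.
  apply: pt_eq => t; rewrite !sumpts_cons.
  have := congr1 (fun f : pt n => f t) Heq; rewrite /= !addptE.
  have := congr1 (fun f : pt n => f t) HD3; rewrite /= sumpts_cons subptE.
  have := Hu t; lia.
exists [:: u, g & rest]; split; first by rewrite /=; lia.
split; first by rewrite /= Hg Hrest /inGamma /inV Hus eqxx Hua.
apply: pt_eq => t; rewrite !sumpts_cons.
have := congr1 (fun f : pt n => f t) HD3; rewrite /= sumpts_cons subptE.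
have := Hu t; lia.
Qed.

Section Nodes.
Variable n : nat.
Implicit Types (s : seq (pt n)).

Lemma all_take (P : pred (pt n)) s j : all P s -> all P (take j s).
Proof. by rewrite -{1}(cat_take_drop j s) all_cat => /andP []. Qed.
Lemma all_drop (P : pred (pt n)) s j : all P s -> all P (drop j s).
Proof. by rewrite -{1}(cat_take_drop j s) all_cat => /andP []. Qed.

Lemma node_cat s1 s2 x t : node (s1 ++ s2) x t = node s1 x t + node s2 (x - size s1) t.
Proof.
rewrite /node take_cat; case: ltnP => H.
  have -> : x - size s1 = 0 by lia.
  by rewrite take0 /= zptE addn0.
by rewrite sumpts_cat (take_oversize H).
Qed.

Lemma node0 s t : node s 0 t = 0.
Proof. by rewrite /node take0 zptE. Qed.

Lemma node_over s x : size s <= x -> node s x = sumpts s.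
Proof. by move=> H; rewrite /node take_oversize. Qed.

Lemma node_succ s j t : j < size s -> node s j.+1 t = node s j t + nth (zpt n) s j t.
Proof.
by move=> H; rewrite /node (take_nth (zpt n) H) -cats1 sumpts_cat sumpts1.
Qed.

Lemma node_ptsum d s j : all (inV d) s -> j <= size s -> ptsum (node s j) = j * d.
Proof.
move=> Ha Hj; rewrite /node (ptsum_sumpts (all_take j Ha)) size_takel //.
Qed.

Lemma in_open_node d (p q : seq (pt n)) x : 0 < d -> all (inV d) p -> all (inV d) q ->
  size q = size p -> x <= size p -> in_open q (node p x) -> node q x = node p x.
Proof.
move=> d0 Hp Hq Hs Hx /hasP [j]; rewrite mem_iota => /andP [Hj1 Hj2] /eqP Hj.
have Hj' : j <= size q by lia.
have := node_ptsum Hq Hj'; rewrite Hj (node_ptsum Hp Hx) => /eqP.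
by rewrite eqn_mul2r eqn0Ngt d0 /= => /eqP E; subst j.
Qed.

Lemma node_in_open (q : seq (pt n)) x (v : pt n) : 0 < x < size q -> node q x = v -> in_open q v.
Proof.
move=> /andP [H1 H2] Hv; apply/hasP; exists x; last by rewrite Hv.
rewrite mem_iota; lia.
Qed.

Lemma adeg_cat (a : pt n) s1 s2 : adeg a (s1 ++ s2) = adeg a s1 + adeg a s2.
Proof. by rewrite /adeg count_cat. Qed.

End Nodes.

Definition wlt n (a : pt n) (C A : seq (pt n)) :=
  adeg a C < adeg a A \/ (adeg a C = adeg a A /\ lexseq C A).

Lemma adeg_gamma n d (a : pt n) D : all (inGamma d a) D -> adeg a D = 0.
Proof.
move=> H; apply/eqP; rewrite -leqn0 leqNgt -has_count; apply/hasP => [[z Hz]] /=.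
by move: (allP H z Hz) => /andP [_ /negbTE ->].
Qed.

Lemma gamma_inV n d (a : pt n) D : all (inGamma d a) D -> all (inV d) D.
Proof. by move=> H; apply/allP => z Hz; move: (allP H z Hz) => /andP []. Qed.

Lemma adeg_cons n (a x : pt n) s : adeg a (x :: s) = (x == a) + adeg a s.
Proof. by []. Qed.

Lemma take_rcons_size T (D : seq T) x k : size D = k -> take k (rcons D x) = D.
Proof. by move=> H; rewrite -cats1 take_size_cat. Qed.

Lemma all_cons T (P : pred T) x s : all P (x :: s) = P x && all P s.
Proof. by []. Qed.

Lemma adeg0_neq n (a : pt n) A y : adeg a A = 0 -> y \in A -> y <> a.
Proof.
move=> H Hy E; subst y; move: H => /eqP; rewrite -leqn0 leqNgt -has_count => /negP; apply.
by apply/hasP; exists a => /=.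
Qed.

Lemma window n d (a : pt n) (A : seq (pt n)) m :
  2 <= n -> 2 <= d -> inV d a -> sorted_pt a ->
  a <> tail2 n 0 d -> a <> tail2 n 1 (d - 1) -> a <> tail2 n 2 (d - 2) ->
  GammaGamma d a ->
  3 <= m -> size A = m.+1 -> all (inV d) A ->
  (adeg a A = 0 -> exists x, inV d x /\ x <> a /\ (forall t, x t <= sumpts A t) /\
                     ltlex x (nth (zpt n) A 0)) ->
  exists C j, size C = m.+1 /\ all (inV d) C /\ sumpts C = sumpts A /\ wlt a C A /\
     0 < j <= m /\ node C j = node A j.
Proof.
move=> n2 d2 Ha Hs Ht0 Ht1 Ht2 HG.
case: m => [|[|m]] // Hm.
case: A => [|A0 [|A1 rest]] // Hsz HA HB.
have Hrest : size rest = m.+1 by move: Hsz => /= [].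
have /and3P [HA0 HA1 Hrest'] : [&& inV d A0, inV d A1 & all (inV d) rest] by exact: HA.
set A := [:: A0, A1 & rest] in HB *.
set Am := nth (zpt n) rest m.
have Amin : Am \in rest by apply: mem_nth; rewrite Hrest.
have HAm : inV d Am by apply: (allP Hrest').
set U := sumpts [:: A0, A1 & take m rest].
have Hrest1 : rest = rcons (take m rest) Am.
  by rewrite -take_nth ?Hrest // take_oversize // Hrest.
have HU : forall t, U t = A0 t + A1 t + sumpts (take m rest) t.
  by move=> t; rewrite /U (sumpts_cons A0) (sumpts_cons A1) addnA.
have HsumA : forall t, sumpts A t = U t + Am t.
  move=> t; rewrite /A {1}Hrest1 (sumpts_cons A0) (sumpts_cons A1) -cats1 sumpts_cat sumpts1 HU; lia.
have HUsum : ptsum U = m.+2 * d.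
  rewrite (@ptsum_sumpts _ d); last by rewrite /= HA0 HA1 all_take.
  by rewrite /= size_takel // Hrest.
have HS1sum : ptsum (sumpts (A1 :: rest)) = m.+2 * d.
  by rewrite (@ptsum_sumpts _ d) /= ?HA1 ?Hrest' // Hrest.
have HnodeAm : node A m.+2 = U by [].
have HnodeA1 : node A 1 = sumpts [:: A0] by [].
have HsumA' : forall t, sumpts A t = A0 t + sumpts (A1 :: rest) t.
  by move=> t; rewrite (sumpts_cons A0).
have Amle : forall t, A1 t + Am t <= sumpts (A1 :: rest) t.
  by move=> t; rewrite (sumpts_cons A1); have := mem_le_sumpts t Amin; lia.
case: (eqVneq (adeg a A) 0) => Hdeg.
-
  have [x [Hx [Hxa [HxA Hlex]]]] := HB Hdeg.
  have HA1a : A1 <> a by apply: (adeg0_neq Hdeg); rewrite !inE eqxx orbT.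
  have HAma : Am <> a by apply: (adeg0_neq Hdeg); rewrite !inE Amin !orbT.
  have [y [Hy [Hya Hcase]]] :
    exists y, inV d y /\ y <> a /\
    (((forall t, y t <= U t) /\ ltlex y A0) \/ ((forall t, y t <= A1 t + Am t) /\ ltlex y A1)).
    apply: (core (R := Am) (x := x)) => //.
      by move=> t; rewrite HU; lia.
    by move=> t; rewrite -HsumA.
  have Hya' : (y == a) = false by apply/eqP.
  have HAma' : (Am == a) = false by apply/eqP.
  case: Hcase => [[HyU HyP] | [HyQ HyQ']].
  + have Hsub : ptsum (subpt U y) = m.+1 * d.
      rewrite ptsum_sub // HUsum; move: Hy => /eqP ->; by rewrite mulSn addKn.
    have [D [HD1 [HD2 HD3]]] := decomp HG (Hm : 2 <= m.+1) Hsub.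
    exists (y :: rcons D Am), m.+2; split; first by rewrite /= size_rcons HD1.
    split; first by rewrite all_cons Hy all_rcons HAm (gamma_inV HD2).
    split.
      apply: pt_eq => t; rewrite HsumA (sumpts_cons y) -cats1 sumpts_cat sumpts1 HD3 subptE.
      by rewrite addnA subnKC // HyU.
    split.
      right; split; last by exists 0.
      by rewrite Hdeg adeg_cons -cats1 adeg_cat (adeg_gamma HD2) adeg_cons Hya' HAma'.
    split; first by rewrite /= leqnn.
    suff -> : node (y :: rcons D Am) m.+2 = U by [].
    apply: pt_eq => t.
    rewrite /node take_cons take_rcons_size // (sumpts_cons y) HD3 subptE.
    by rewrite subnKC // HyU.
  + have HyS : forall t, y t <= sumpts (A1 :: rest) t.
      by move=> t; apply: leq_trans (HyQ t) (Amle t).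
    have Hsub : ptsum (subpt (sumpts (A1 :: rest)) y) = m.+1 * d.
      rewrite ptsum_sub // HS1sum; move: Hy => /eqP ->; by rewrite mulSn addKn.
    have [D [HD1 [HD2 HD3]]] := decomp HG (Hm : 2 <= m.+1) Hsub.
    exists [:: A0, y & D], 1; split; first by rewrite /= HD1.
    split; first by rewrite !all_cons HA0 Hy (gamma_inV HD2).
    split.
      apply: pt_eq => t; rewrite HsumA' (sumpts_cons A0) (sumpts_cons y) HD3 subptE.
      by rewrite subnKC // HyS.
    split.
      right; split; last by exists 1.
      rewrite Hdeg !adeg_cons (adeg_gamma HD2) Hya'.
      move: Hdeg; rewrite /A !adeg_cons.
      by case: eqP.
    by [].
-
  case: (eqVneq A0 a) => HA0a.
  + have [D [HD1 [HD2 HD3]]] := decomp HG (isT : 2 <= m.+2) HUsum.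
    exists (rcons D Am), m.+2; split; first by rewrite size_rcons HD1.
    split; first by rewrite all_rcons HAm (gamma_inV HD2).
    split.
      by apply: pt_eq => t; rewrite HsumA -cats1 sumpts_cat sumpts1 HD3.
    split.
      left; rewrite -cats1 adeg_cat (adeg_gamma HD2) adeg_cons /A adeg_cons HA0a eqxx.
      have : (Am == a) <= adeg a (A1 :: rest).
        case: eqP => // E; rewrite /adeg -has_count; apply/hasP; exists Am.
          by rewrite inE Amin orbT.
        by rewrite /= E eqxx.
      by rewrite add0n /adeg /= addn0 add1n ltnS.
    split; first by rewrite /= leqnn.
    suff -> : node (rcons D Am) m.+2 = U by [].
    by rewrite /node take_rcons_size.
  + have [D [HD1 [HD2 HD3]]] := decomp HG (isT : 2 <= m.+2) HS1sum.
    exists (A0 :: D), 1; split; first by rewrite /= HD1.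
    split; first by rewrite all_cons HA0 (gamma_inV HD2).
    split.
      by apply: pt_eq => t; rewrite HsumA' (sumpts_cons A0) HD3.
    split; last first.
      split; first done.
      by rewrite HnodeA1 /node take_cons take0.
    by left; rewrite adeg_cons (negbTE HA0a) add0n (adeg_gamma HD2) lt0n.
Qed.

Lemma facet_lt_cat n (a : pt n) (pre C A post : seq (pt n)) :
  size C = size A -> wlt a C A -> facet_lt a (pre ++ C ++ post) (pre ++ A ++ post).
Proof.
move=> Hs [Hlt | [Heq [idx [Hidx [Ht Hl]]]]].
  by left; rewrite !adeg_cat ltn_add2l ltn_add2r.
right; split; first by rewrite !adeg_cat Heq.
exists (size pre + idx); split; first by rewrite !size_cat; lia.
split.
  rewrite !take_cat ltnNge leq_addr /= addKn.
  by rewrite Hs Hidx Ht.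
rewrite !nth_cat ltnNge leq_addr /= addKn.
by rewrite Hs Hidx.
Qed.

Lemma node_cat3 n (pre C A post : seq (pt n)) x :
  size C = size A -> node C (x - size pre) = node A (x - size pre) ->
  node (pre ++ C ++ post) x = node (pre ++ A ++ post) x.
Proof.
move=> Hs HCA; apply: pt_eq => t.
rewrite !node_cat Hs; congr (_ + (_ + _)).
by rewrite HCA.
Qed.

Lemma node_eq_out n (C A : seq (pt n)) y :
  size C = size A -> sumpts C = sumpts A -> (y = 0 \/ size A <= y) -> node C y = node A y.
Proof.
move=> Hs HS [->|Hy].
  by apply: pt_eq => t; rewrite !node0.
by rewrite !node_over ?Hs.
Qed.

Unset Implicit Arguments.

Theorem lemma3p5 (n d : nat) (a lam : pt n) (p : seq (pt n)) (i m : nat) :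
  2 <= n -> 2 <= d ->
  inV d a -> sorted_pt a ->
  a <> tail2 n 0 d -> a <> tail2 n 1 (d - 1) -> a <> tail2 n 2 (d - 2) ->
  GammaGamma d a ->
  in_semigroup d a lam ->
  is_chain d lam p ->
  1 <= adeg a p ->
  1 <= i -> i + m <= ptsum lam %/ d ->
  facet_Fp d a lam p
    [pred x | (0 < x < ptsum lam %/ d) && ~~ (i <= x < i + m)] ->
  m <= 2.
Proof.
move=> n2 d2 Ha Hs Ht0 Ht1 Ht2 HG _ [Hpall Hpsum] _ i1 Him Hfacet.
have d0 : 0 < d by apply: ltnW.
have Hk : ptsum lam %/ d = size p by rewrite -Hpsum (ptsum_sumpts Hpall) mulnK.
rewrite Hk in Him Hfacet.
rewrite leqNgt; apply/negP => Hm.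
case: Hfacet => [[HTb [q [[Hqall Hqsum] [Hqlt Hqcov]]]] Hmax].
have Hsq : size q = size p.
  apply/eqP; rewrite -(eqn_pmul2r d0) -(ptsum_sumpts Hqall) -(ptsum_sumpts Hpall).
  by rewrite Hqsum Hpsum.
have cover_contra : forall q' : seq (pt n), is_chain d lam q' -> facet_lt a q' p ->
    (forall x, 0 < x < size p -> ~~ (i <= x < i + m) -> in_open q' (node p x)) ->
    forall j, i <= j < i + m -> in_open q' (node p j) -> False.
  move=> q' Hq' Hlt' Hcov j Hj Hoj.
  have Hj0 : 0 < j < size p by lia.
  have Hface : face_Fp d a lam p [pred x | ((0 < x < size p) && ~~ (i <= x < i + m)) || (x == j)].
    split.
      by move=> x /= /orP [/andP [] // | /eqP ->].
    exists q'; split => //; split => //.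
    by move=> x /= /orP [/andP [H1 H2] | /eqP ->]; [apply: Hcov | ].
  have := Hmax _ Hface; move=> H.
  have := H (fun x Hx => introT orP (or_introl Hx)) j; rewrite /= eqxx orbT => /(_ isT).
  by rewrite Hj andbF.
have Hnode : forall x, (x <= i - 1 \/ i + m <= x) -> x <= size p -> node q x = node p x.
  move=> x Hx Hxp.
  case: (posnP x) => [->|x0]; first by apply: pt_eq => t; rewrite !node0.
  case: (eqVneq x (size p)) => [->|xp].
    by rewrite !node_over ?Hsq // Hqsum Hpsum.
  apply: (in_open_node d0 Hpall Hqall Hsq Hxp); apply: Hqcov => /=.
  apply/andP; split; first by apply/andP; split => //; rewrite ltn_neqAle xp Hxp.
  by apply/negP => /andP [H1 H2]; case: Hx; lia.
have Hlink : forall j, j < size p -> node q j = node p j -> node q j.+1 = node p j.+1 ->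
    nth (zpt n) q j = nth (zpt n) p j.
  move=> j Hj H1 H2; apply: pt_eq => t.
  have := node_succ t (Hj : j < size p); have := node_succ t (_ : j < size q).
  rewrite Hsq => /(_ Hj) ; rewrite H1 H2 => ->; lia.
have Hpre : take (i - 1) q = take (i - 1) p.
  apply: (@eq_from_nth _ (zpt n)); first by rewrite !size_takel ?Hsq //; lia.
  move=> j; rewrite size_takel ?Hsq; last by lia.
  move=> Hj; rewrite !nth_take //; apply: Hlink; try lia; apply: Hnode; lia.
have Hpost : drop (i + m) q = drop (i + m) p.
  apply: (@eq_from_nth _ (zpt n)); first by rewrite !size_drop Hsq.
  move=> j; rewrite size_drop Hsq => Hj; rewrite !nth_drop.
  by apply: Hlink; try lia; apply: Hnode; lia.
set pre := take (i - 1) p.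
set A := take m.+1 (drop (i - 1) p).
set post := drop (i + m) p.
set B := take m.+1 (drop (i - 1) q).
have e : m.+1 + (i - 1) = i + m by lia.
have Hp : p = pre ++ A ++ post.
  by rewrite /pre /A /post -e -drop_drop !cat_take_drop.
have Hq : q = pre ++ B ++ post.
  by rewrite /pre /B /post -Hpre -Hpost -e -drop_drop !cat_take_drop.
have HsA : size A = m.+1 by rewrite size_takel // size_drop; lia.
have HsB : size B = m.+1 by rewrite size_takel // size_drop Hsq; lia.
have Hspre : size pre = i - 1 by rewrite size_takel //; lia.
have HallA : all (inV d) A by move: Hpall; rewrite Hp !all_cat => /and3P [].
have HallB : all (inV d) B by move: Hqall; rewrite Hq !all_cat => /and3P [].
have HsumBA : sumpts B = sumpts A.
  apply: pt_eq => t.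
  have := congr1 (fun f : pt n => f t) (etrans Hqsum (esym Hpsum)).
  by rewrite /= {1}Hq {1}Hp !sumpts_cat => /eqP; rewrite eqn_add2l eqn_add2r => /eqP.
have HB : adeg a A = 0 -> exists x, inV d x /\ x <> a /\ (forall t, x t <= sumpts A t) /\
                     ltlex x (nth (zpt n) A 0).
  move=> HA0.
  have HqA : adeg a B = 0 /\ lexseq q p.
    case: Hqlt; rewrite {1}Hq {1}Hp !adeg_cat HA0.
      by rewrite add0n ltn_add2l ltnNge leq_addl.
    move=> [Heq Hlex]; split => //; move: Heq; rewrite add0n => /addnI.
    by rewrite -{2}[adeg a post]add0n => /addIn.
  case: HqA => [HB0 [idx [Hidx [Htk Hlx]]]].
  have B0in : nth (zpt n) B 0 \in B by apply: mem_nth; rewrite HsB.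
  exists (nth (zpt n) B 0); split; first by apply: (allP HallB).
  split; first by apply: (adeg0_neq HB0).
  split; first by move=> t; rewrite -HsumBA; apply: mem_le_sumpts.
  case: (ltngtP idx (i - 1)) => Hc.
  - exfalso; move: Hlx; rewrite {1}Hq {1}Hp !nth_cat Hspre Hc.
    by rewrite (negbTE (ltlex_irr _)).
  - exfalso.
    have Hti : take i q = take i p by rewrite -(take_takel _ (_ : i <= idx)) ?Htk ?take_takel //; lia.
    apply: (cover_contra q (conj Hqall Hqsum) Hqlt _ i).
    - by move=> x Hx1 Hx2; apply: Hqcov; rewrite /= Hx1.
    - by rewrite leqnn /=; lia.
    apply: (@node_in_open _ q i); first by rewrite Hsq; lia.
    by rewrite /node Hti.
  - by move: Hlx; rewrite {1}Hq {1}Hp !nth_cat Hspre Hc ltnn subnn HsA HsB.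
have [C [j [HsC [HallC [HsumC [HwC [Hj HnC]]]]]]] :=
  window n2 d2 Ha Hs Ht0 Ht1 Ht2 HG Hm HsA HallA HB.
have Hq'chain : is_chain d lam (pre ++ C ++ post).
  split.
    by move: Hpall; rewrite Hp !all_cat HallC => /and3P [-> _ ->].
  apply: pt_eq => t; rewrite -Hpsum Hp !sumpts_cat.
  by rewrite HsumC.
have Hq'lt : facet_lt a (pre ++ C ++ post) p.
  by rewrite Hp; apply: facet_lt_cat; rewrite ?HsC ?HsA.
have Hsq' : size (pre ++ C ++ post) = size p by rewrite Hp !size_cat HsC HsA.
have Hcov' : forall x, (x - size pre = 0 \/ m.+1 <= x - size pre \/ x - size pre = j) ->
    node (pre ++ C ++ post) x = node p x.
  move=> x Hy; rewrite Hp; apply: node_cat3; first by rewrite HsC HsA.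
  case: Hy => [->|[Hy|->]] //.
    by apply: node_eq_out; rewrite ?HsC ?HsA //; left.
  by apply: node_eq_out; rewrite ?HsC ?HsA //; right.
apply: (cover_contra (pre ++ C ++ post) Hq'chain Hq'lt _ (i - 1 + j)).
- move=> x Hx1 Hx2; apply: (@node_in_open _ _ x); first by rewrite Hsq'.
  apply: Hcov'; rewrite Hspre.
  have [Hxl | Hxr] : x <= i - 1 \/ i + m <= x by lia.
    by left; lia.
  by right; left; lia.
- lia.
- apply: (@node_in_open _ _ (i - 1 + j)); first by rewrite Hsq'; lia.
  apply: Hcov'; rewrite Hspre; right; right; lia.
Qed.
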